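(* Let $B$ be a supersoluble brace, and let $C$ be a maximal subbrace of $B$ (a proper subbrace not properly contained in any proper subbrace). Then $|B:C|$ is a prime number. In particular, $(C,+)$ (resp. $(C,\cdot)$) is a maximal subgroup of $(B,+)$ (resp. $(B,\cdot)$) of prime index.
   Context: A brace (skew left brace) is a set $B$ with two binary operations $+$ and $\cdot$ such that $(B,+)$ and $(B,\cdot)$ are groups and $a(b+c)=ab-a+ac$ for all $a,b,c\in B$. A subbrace is a subset that is a subgroup of both groups. $\lambda_a(b)=-a+ab$ defines a homomorphism $\lambda\colon(B,\cdot)\to\operatorname{Aut}(B,+)$. An ideal is a subbrace normal in both groups and invariant under all $\lambda_b$; quotients by ideals are braces. $\operatorname{Soc}(B)=\operatorname{Ker}\lambda\cap Z(B,+)$. $B$ is supersoluble if there is a finite chain of ideals $\{0\}=I_0\le\dots\le I_n=B$ such that for each $i$, either $(I_{i+1}/I_i,+)$ is infinite cyclic and $I_{i+1}/I_i\le\operatorname{Soc}(B/I_i)$, or $I_{i+1}/I_i$ has prime order. For a subbrace $C$, if $|(B,+):(C,+)|$ and $|(B,\cdot):(C,\cdot)|$ are both finite and equal to $n$, the index $|B:C|$ is defined to be $n$. *)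

(* Defs.v *)
(* Braces may be infinite,
   so the two groups are given by explicit operations and axioms. *)
From mathcomp Require Import all_boot.
Set Implicit Arguments.
Unset Strict Implicit.
Unset Printing Implicit Defensive.

(* A skew left brace: (B,+) and (B,.) groups, a(b+c) = ab - a + ac. *)
Record brace := Brace {
  car :> Type;
  badd : car -> car -> car;  bzero : car;  bopp : car -> car;
  bmul : car -> car -> car;  bone : car;   binv : car -> car;
  baddA : forall a b c, badd a (badd b c) = badd (badd a b) c;
  badd0x : forall a, badd bzero a = a;
  baddx0 : forall a, badd a bzero = a;
  baddNx : forall a, badd (bopp a) a = bzero;
  baddxN : forall a, badd a (bopp a) = bzero;
  bmulA : forall a b c, bmul a (bmul b c) = bmul (bmul a b) c;
  bmul1x : forall a, bmul bone a = a;
  bmulx1 : forall a, bmul a bone = a;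
  bmulVx : forall a, bmul (binv a) a = bone;
  bmulxV : forall a, bmul a (binv a) = bone;
  brace_compat : forall a b c,
    bmul a (badd b c) = badd (badd (bmul a b) (bopp a)) (bmul a c)
}.

Section GroupNotions.
Variables (T : Type) (op : T -> T -> T) (e : T) (inv : T -> T).

Definition is_subgroup (H : T -> Prop) : Prop :=
  [/\ H e, (forall x y, H x -> H y -> H (op x y)) & (forall x, H x -> H (inv x))].

Definition is_normal (H : T -> Prop) : Prop :=
  forall g x, H x -> H (op (op g x) (inv g)).

(* |K : H| = n : there are n elements of K lying in pairwise distinct left
   cosets of H, and these cosets cover K. *)
Definition has_index (K H : T -> Prop) (n : nat) : Prop :=
  exists f : 'I_n -> T,
    [/\ (forall i, K (f i)),
        (forall i j, H (op (inv (f i)) (f j)) -> i = j) &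
        (forall x, K x -> exists i, H (op (inv (f i)) x))].

Definition maximal_subgroup (H : T -> Prop) : Prop :=
  [/\ is_subgroup H, (exists x, ~ H x) &
      (forall K, is_subgroup K -> (forall x, H x -> K x) ->
         (forall x, K x) \/ (forall x, K x -> H x))].

Definition natmul (g : T) (n : nat) : T := iter n (op g) e.
End GroupNotions.

Definition setT_ (T : Type) : T -> Prop := fun _ => True.

Section BraceNotions.
Variable B : brace.

Definition lambda (a b : B) : B := badd (bopp a) (bmul a b).

Definition subbrace (C : B -> Prop) : Prop :=
  is_subgroup (@badd B) (bzero B) (@bopp B) C /\
  is_subgroup (@bmul B) (bone B) (@binv B) C.

Definition ideal (I : B -> Prop) : Prop :=
  [/\ subbrace I, is_normal (@badd B) (@bopp B) I,
      is_normal (@bmul B) (@binv B) I &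
      (forall b x, I x -> I (lambda b x))].

Definition maximal_subbrace (C : B -> Prop) : Prop :=
  [/\ subbrace C, (exists x, ~ C x) &
      (forall D, subbrace D -> (forall x, C x -> D x) ->
         (forall x, D x) \/ (forall x, D x -> C x))].

(* For ideals J <= I: (I/J,+) is infinite cyclic. *)
Definition quot_inf_cyclic (I J : B -> Prop) : Prop :=
  exists g, I g /\
    (forall x, I x -> exists n,
        J (badd (bopp (natmul (@badd B) (bzero B) g n)) x) \/
        J (badd (bopp (bopp (natmul (@badd B) (bzero B) g n))) x)) /\
    (forall n, J (natmul (@badd B) (bzero B) g n) -> n = 0).

(* For ideals J <= I: I/J <= Soc(B/J) = Ker lambda cap Z(B/J,+). *)
Definition quot_in_socle (I J : B -> Prop) : Prop :=
  forall x, I x ->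
    (forall b, J (badd (bopp b) (lambda x b))) /\
    (forall y, J (badd (bopp (badd y x)) (badd x y))).

(* For ideals J <= I: I/J has prime order. *)
Definition quot_prime_order (I J : B -> Prop) : Prop :=
  exists p, prime p /\ has_index (@badd B) (@bopp B) I J p.

Definition supersoluble : Prop :=
  exists (n : nat) (I : nat -> B -> Prop),
    [/\ (forall x, I 0%N x <-> x = bzero B),
        (forall x, I n x),
        (forall i, (i <= n)%N -> ideal (I i)),
        (forall i, (i < n)%N -> forall x, I i x -> I i.+1 x) &
        (forall i, (i < n)%N ->
           (quot_inf_cyclic (I i.+1) (I i) /\ quot_in_socle (I i.+1) (I i))
           \/ quot_prime_order (I i.+1) (I i))].
End BraceNotions.

(* Main.v *)
Require Import Defs.
From mathcomp Require Import all_boot all_order all_algebra.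
From mathcomp Require Import boolp zify.
Set Implicit Arguments.
Unset Strict Implicit.
Unset Printing Implicit Defensive.

Record isGrp (T : Type) (op : T -> T -> T) (e : T) (inv : T -> T) := IsGrp {
  gA : forall a b c, op a (op b c) = op (op a b) c;
  g1x : forall a, op e a = a; gx1 : forall a, op a e = a;
  gVx : forall a, op (inv a) a = e; gxV : forall a, op a (inv a) = e }.

Section Grp.
Variables (T : Type) (op : T -> T -> T) (e : T) (inv : T -> T).
Variable gax : isGrp op e inv.
Let opA := gA gax. Let op1x := g1x gax. Let opx1 := gx1 gax.
Let opVx := gVx gax. Let opxV := gxV gax.

Lemma opKV a b : op (inv a) (op a b) = b.
Proof. by rewrite opA opVx op1x. Qed.
Lemma opVK a b : op a (op (inv a) b) = b.
Proof. by rewrite opA opxV op1x. Qed.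
Lemma opKN a b : op (op b a) (inv a) = b.
Proof. by rewrite -opA opxV opx1. Qed.
Lemma opNK a b : op (op b (inv a)) a = b.
Proof. by rewrite -opA opVx opx1. Qed.
Lemma op_injl a b c : op a b = op a c -> b = c.
Proof. by move=> h; rewrite -(opKV a b) h opKV. Qed.
Lemma invK a : inv (inv a) = a.
Proof. by apply: (@op_injl (inv a)); rewrite opxV opVx. Qed.
Lemma invM a b : inv (op a b) = op (inv b) (inv a).
Proof. by apply: (@op_injl (op a b)); rewrite opxV -opA opVK opxV. Qed.
Lemma inv1 : inv e = e.
Proof. by rewrite -{2}(opVx e) opx1. Qed.
Lemma inv_uniq a b : op a b = e -> b = inv a.
Proof. by move=> h; apply: (@op_injl a); rewrite h opxV. Qed.

Section Sub.
Variable H : T -> Prop.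
Hypothesis sH : is_subgroup op e inv H.
Lemma sub1 : H e. Proof. by case: sH. Qed.
Lemma subM x y : H x -> H y -> H (op x y). Proof. by case: sH => _ h _; apply: h. Qed.
Lemma subV x : H x -> H (inv x). Proof. by case: sH => _ _ h; apply: h. Qed.
Lemma subVr x : H (inv x) -> H x. Proof. by move/subV; rewrite invK. Qed.
Lemma subMl x y : H x -> H (op x y) -> H y.
Proof. by move=> hx hxy; rewrite -(opKV x y); apply: subM (subV hx) hxy. Qed.
Lemma subMr x y : H y -> H (op x y) -> H x.
Proof. by move=> hy hxy; rewrite -(opKN y x); apply: subM hxy (subV hy). Qed.
Lemma subVV a b c : H (op (inv a) b) -> H (op (inv a) c) -> H (op (inv b) c).
Proof.
move=> h1 h2; have := subM (subV h1) h2.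
by rewrite invM invK -opA opVK.
Qed.
Lemma subVV2 a b x : H (op (inv a) x) -> H (op (inv b) x) -> H (op (inv a) b).
Proof.
move=> h1 h2; have := subM h1 (subV h2).
by rewrite invM invK -opA opVK.
Qed.
End Sub.

Lemma lagrange_prime (G H K : T -> Prop) p (f : 'I_p -> T) :
  is_subgroup op e inv G -> is_subgroup op e inv H -> is_subgroup op e inv K ->
  (forall x, H x -> K x) -> (forall x, K x -> G x) ->
  prime p ->
  [/\ (forall i, G (f i)),
      (forall i j, H (op (inv (f i)) (f j)) -> i = j) &
      (forall x, G x -> exists i, H (op (inv (f i)) x))] ->
  (forall x, K x -> H x) \/ (forall x, G x -> K x).
Proof.
move=> sG sH sK HK KG pp [fG fD fC].
have [i0 Hi0] := fC e (sub1 sG).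
rewrite opx1 in Hi0; have {}Hi0 := subVr sH Hi0.
pose idx x := odflt i0 [pick i | `[< H (op (inv (f i)) x) >]].
have idxP x : G x -> H (op (inv (f (idx x))) x).
  move=> Gx; rewrite /idx; case: pickP => [i /asboolP //|] /= h.
  have [i Hi] := fC x Gx; by move: (h i) => /asboolP.
have idxU x i : G x -> H (op (inv (f i)) x) -> idx x = i.
  move=> Gx hi; apply: fD; have := subVV2 sH (idxP x Gx) hi. exact.
have GM x y : G x -> G y -> G (op x y) by apply: subM.
have GV x : G x -> G (inv x) by apply: subV.
pose R i j := `[< K (op (inv (f i)) (f j)) >].
pose A := [set j | R i0 j].
have AE j : (j \in A) = `[< K (f j) >].
  rewrite inE /R; apply/asboolP/asboolP => h.
    rewrite -(opVK (f i0) (f j)); exact (subM sK (HK _ Hi0) h).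
  exact (subM sK (subV sK (HK _ Hi0)) h).
pose phi i j := idx (op (f i) (f j)).
have phi_inj i : injective (phi i).
  move=> j j' h; apply: fD.
  have h1 := idxP _ (GM _ _ (fG i) (fG j)); have h2 := idxP _ (GM _ _ (fG i) (fG j')).
  rewrite -/(phi i j) h in h1; have := subVV sH h1 h2.
  by rewrite invM -opA opKV.
have classE i : [set j | R i j] = phi i @: A.
  apply/setP => j'; rewrite inE; apply/idP/idP.
  - move/asboolP => Kj'.
    have Gy : G (op (inv (f i)) (f j')) by apply: GM; [apply: GV|].
    apply/imsetP; exists (idx (op (inv (f i)) (f j'))).
      rewrite AE; apply/asboolP.
      have h := HK _ (idxP _ Gy).
      have := subM sK Kj' (subV sK h); by rewrite invM invK opVK.
    apply/esym/idxU; first by apply: GM.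
    have h := subV sH (idxP _ Gy); rewrite invM invK invM invK in h.
    by rewrite opA.
  - case/imsetP => j; rewrite AE => /asboolP Kj ->; apply/asboolP.
    have h := HK _ (idxP _ (GM _ _ (fG i) (fG j))); rewrite -/(phi i j) in h.
    have := subM sK Kj (subV sK h).
    by rewrite invM invK invM !opA opxV op1x.
have eqR : {in [set: 'I_p] & &, equivalence_rel R}.
  move=> i j k _ _ _; split.
    by apply/asboolP; rewrite opVx; apply: sub1 sK.
  move/asboolP => hij; apply/idP/idP => /asboolP h; apply/asboolP.
    by have := subM sK (subV sK hij) h; rewrite invM invK -opA opVK.
  by have := subM sK hij h; rewrite -opA opVK.
have cardP := card_uniform_partition _ (equivalence_partitionP eqR).
have /cardP : {in equivalence_partition R [set: 'I_p], forall S : {set 'I_p}, #|S| = #|A|}.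
  move=> S /imsetP [i _ ->].
  have -> : [set y in [set: 'I_p] | R i y] = [set j | R i j].
    by apply/setP => j; rewrite !inE.
  by rewrite classE card_imset.
rewrite cardsT card_ord => pE.
have : #|A| %| p by apply/dvdnP; exists #|equivalence_partition R [set: 'I_p]|.
case/primeP: pp => _ hp /hp /orP [/eqP A1 | /eqP Ap].
- left => x Kx.
  have Gx := KG _ Kx; have h := idxP _ Gx.
  have : idx x \in A.
    rewrite AE; apply/asboolP.
    by have := subM sK Kx (subV sK (HK _ h)); rewrite invM invK opVK.
  have i0A : i0 \in A by rewrite AE; apply/asboolP; apply: HK.
  move/eqP/cards1P: A1 => [k Ak]; rewrite Ak !inE in i0A * => /eqP e1.
  move/eqP: i0A => e2; rewrite e1 -e2 in h.
  by have := subM sH Hi0 h; rewrite opVK.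
- right => x Gx.
  have AT : A = [set: 'I_p].
    by apply/eqP; rewrite eqEcard subsetT cardsT card_ord Ap leqnn.
  have : idx x \in A by rewrite AT inE.
  rewrite AE => /asboolP Kf.
  by have := subM sK Kf (HK _ (idxP _ Gx)); rewrite opVK.
Qed.

Lemma index_transfer (I J C : T -> Prop) p :
  is_subgroup op e inv C ->
  has_index op inv I J p ->
  (forall x, J x -> C x) -> (forall x, C x -> I x -> J x) ->
  is_subgroup op e inv I ->
  (forall x, exists y c, [/\ I y, C c & x = op y c]) ->
  has_index op inv (@setT_ T) C p.
Proof.
move=> sC [g [gI gD gC]] JC CIJ sI dec; exists g; split => //.
- move=> i j h; apply: gD; apply: CIJ h _.
  exact (subM sI (subV sI (gI i)) (gI j)).
- move=> x _; have [y [c [Iy Cc ->]]] := dec x.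
  have [i hi] := gC y Iy; exists i; rewrite opA.
  exact (subM sC (JC _ hi) Cc).
Qed.

End Grp.

Notation "a ⊕ b" := (badd a b) (at level 50, left associativity).
Notation "⊖ a" := (bopp a) (at level 35, right associativity).
Notation "a ⊗ b" := (bmul a b) (at level 40, left associativity).

Section Brace.
Variable B : brace.
Local Notation o := (bzero B).
Local Notation inv := (@binv B).
Local Notation lam := (@lambda B).

Lemma addG : isGrp (@badd B) o (@bopp B).
Proof. split; [exact: baddA|exact: badd0x|exact: baddx0|exact: baddNx|exact: baddxN]. Qed.
Lemma mulG : isGrp (@bmul B) (bone B) (@binv B).
Proof. split; [exact: bmulA|exact: bmul1x|exact: bmulx1|exact: bmulVx|exact: bmulxV]. Qed.

Lemma mulx0 (a : B) : a ⊗ o = a.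
Proof.
have h := brace_compat a o o; rewrite badd0x in h.
have h2 : ⊖ (a ⊗ o) ⊕ (a ⊗ o) = ⊖ (a ⊗ o) ⊕ (a ⊗ o ⊕ ⊖ a ⊕ a ⊗ o) by rewrite -h.
rewrite -!baddA (opKV addG) baddNx in h2.
by rewrite -(opVK addG a (a ⊗ o)) -h2 baddx0.
Qed.

Lemma one_zero : bone B = o.
Proof. by rewrite -(mulx0 (bone B)) bmul1x. Qed.

Lemma mul_add (a b : B) : a ⊗ b = a ⊕ lam a b.
Proof. by rewrite /lambda (opVK addG). Qed.

Lemma lam_add (a b c : B) : lam a (b ⊕ c) = lam a b ⊕ lam a c.
Proof. by rewrite /lambda brace_compat !baddA. Qed.

Lemma lam0 (a : B) : lam a o = o.
Proof. by rewrite /lambda mulx0 baddNx. Qed.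

Lemma lam_opp (a b : B) : lam a (⊖ b) = ⊖ lam a b.
Proof.
apply: (inv_uniq addG); by rewrite -lam_add baddxN lam0.
Qed.

Lemma lam_one (b : B) : lam o b = b.
Proof. by rewrite /lambda -one_zero bmul1x one_zero (inv1 addG) badd0x. Qed.

Lemma lam_mul (a b c : B) : lam (a ⊗ b) c = lam a (lam b c).
Proof.
have h : a ⊗ (⊖ b) = a ⊕ ⊖ (a ⊗ b) ⊕ a.
  have := brace_compat a b (⊖ b); rewrite baddxN mulx0 => h.
  apply: (op_injl addG (a := a ⊗ b ⊕ ⊖ a)); rewrite -h.
  by rewrite !baddA (opNK addG) baddxN badd0x.
rewrite /lambda brace_compat h.
by rewrite !baddA baddNx badd0x (opKN addG) bmulA.
Qed.

Lemma lamK (a b : B) : lam (inv a) (lam a b) = b.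
Proof. by rewrite -lam_mul bmulVx one_zero lam_one. Qed.
Lemma lamKV (a b : B) : lam a (lam (inv a) b) = b.
Proof. by rewrite -lam_mul bmulxV one_zero lam_one. Qed.

Lemma lam_invmul (a b : B) : lam a (inv a ⊗ b) = ⊖ a ⊕ b.
Proof. by rewrite /lambda bmulA bmulxV bmul1x. Qed.

Lemma invmul_lam (a b : B) : inv a ⊗ b = lam (inv a) (⊖ a ⊕ b).
Proof. by rewrite -lam_invmul lamK. Qed.

Lemma add_mul (a b : B) : a ⊕ b = a ⊗ lam (inv a) b.
Proof. by rewrite mul_add lamKV. Qed.

Lemma lam_natmul (a g : B) n : lam a (natmul (@badd B) o g n) = natmul (@badd B) o (lam a g) n.
Proof. elim: n => [|n IH] /=; first exact: lam0. by rewrite lam_add IH. Qed.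

Definition lam_inv (L : B -> Prop) := forall b x, L x -> L (lam b x).
Definition addsub (L : B -> Prop) := is_subgroup (@badd B) o (@bopp B) L.

Lemma lsub_mulsub L : addsub L -> lam_inv L -> is_subgroup (@bmul B) (bone B) inv L.
Proof.
move=> sL lL; split.
- rewrite one_zero; exact: (sub1 sL).
- move=> x y Lx Ly; rewrite mul_add; exact: (subM sL Lx (lL _ _ Ly)).
- move=> x Lx.
  have h : lam x (inv x) = ⊖ x.
    apply: (op_injl addG (a := x)); by rewrite -mul_add bmulxV one_zero baddxN.
  by rewrite -(lamK x (inv x)) h; apply: lL; apply: (subV sL).
Qed.

Lemma coset_equiv L : lam_inv L -> forall a b, L (inv a ⊗ b) <-> L (⊖ a ⊕ b).
Proof.
move=> lL a b; split => h.
- by rewrite -lam_invmul; apply: lL.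
- by rewrite invmul_lam; apply: lL.
Qed.

Definition D (C L : B -> Prop) (x : B) := exists c, C c /\ L (⊖ c ⊕ x).

Lemma D_subbrace C L : subbrace C -> ideal L -> subbrace (D C L).
Proof.
move=> [aC mC] [[aL mL] nL nmL lL]; split.
- split.
  + exists o; split; first exact: (sub1 aC).
    by rewrite baddNx; apply: (sub1 aL).
  + move=> x y [c [Cc Lx]] [c' [Cc' Ly]]; exists (c ⊕ c'); split; first exact: (subM aC).
    have := subM aL (nL (⊖ c') _ Lx) Ly.
    by rewrite (invK addG) !baddA (opKN addG) (invM addG) ?baddA.
  + move=> x [c [Cc Lx]]; exists (⊖ c); split; first exact: (subV aC).
    have := nL c _ (subV aL Lx).
    by rewrite (invK addG) (invM addG) (invK addG) !baddA (opKN addG).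
- split.
  + exists o; split; first by rewrite -one_zero; exact: (sub1 mC).
    by rewrite one_zero baddNx; apply: (sub1 aL).
  + move=> x y [c [Cc Lx]] [c' [Cc' Ly]]; exists (c ⊗ c'); split; first exact: (subM mC).
    apply/(coset_equiv lL); move/(coset_equiv lL): Lx => Lx; move/(coset_equiv lL): Ly => Ly.
    have := subM mL (nmL (inv c') _ Lx) Ly.
    by rewrite (invK mulG) !bmulA (opKN mulG) (invM mulG) ?bmulA.
  + move=> x [c [Cc Lx]]; exists (inv c); split; first exact: (subV mC).
    apply/(coset_equiv lL); move/(coset_equiv lL): Lx => Lx.
    have := nmL c _ (subV mL Lx).
    by rewrite (invK mulG) (invM mulG) (invK mulG) !bmulA (opKN mulG).
Qed.

End Brace.

Import GRing.Theory Num.Theory.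

Section Zm.
Local Open Scope ring_scope.
Variable B : brace.
Local Notation o := (bzero B).
Local Notation nm := (natmul (@badd B) (bzero B)).

Definition zm (h : B) (z : int) : B :=
  match z with Posz n => nm h n | Negz n => ⊖ nm h n.+1 end.

Lemma nm_comm h n : h ⊕ nm h n = nm h n ⊕ h.
Proof.
elim: n => [|n IH] /=; first by rewrite badd0x baddx0.
by rewrite -baddA -IH.
Qed.

Lemma zm0 h : zm h 0 = o. Proof. by []. Qed.
Lemma zm1 h : zm h 1 = h. Proof. by rewrite /= baddx0. Qed.

Lemma zmN h z : zm h (- z) = ⊖ zm h z.
Proof.
case: z => [[|n]|n].
- by rewrite oppr0 /= (inv1 (addG B)).
- by rewrite -NegzE.
- by rewrite NegzE opprK /= (invK (addG B)).
Qed.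

Lemma zmS h z : zm h (z + 1) = zm h z ⊕ h.
Proof.
case: z => [n|[|n]].
- by rewrite -PoszD addn1 /= nm_comm.
- by rewrite /= baddx0 baddNx.
- have -> : Negz n.+1 + 1 = Negz n by rewrite !NegzE; lia.
  change (⊖ nm h n.+1 = ⊖ (h ⊕ nm h n.+1) ⊕ h); by rewrite (invM (addG B)) (opNK (addG B)).
Qed.

Lemma zm_add h a b : zm h (a + b) = zm h a ⊕ zm h b.
Proof.
have pos : forall (a : int) (n : nat), zm h (a + n) = zm h a ⊕ zm h n.
  move=> {}a; elim=> [|n IH]; first by rewrite addr0 baddx0.
  by rewrite -addn1 PoszD addrA zmS IH zmS baddA.
case: b => [n|n]; first exact: pos.
have E := pos (a - n.+1%:Z) n.+1; rewrite subrK in E.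
rewrite NegzE zmN E (opKN (addG B)).
by rewrite -[in RHS]NegzE.
Qed.

Lemma zm_sub (H : B -> Prop) h z : is_subgroup (@badd B) o (@bopp B) H -> H h -> H (zm h z).
Proof.
move=> sH Hh.
have hn : forall n, H (nm h n).
  elim=> [|n IH] /=; [exact: (sub1 sH) | exact: (subM sH Hh IH)].
case: z => n; [exact: hn| exact (subV sH (hn n.+1))].
Qed.

Lemma lam_zm b h z : lambda b (zm h z) = zm (lambda b h) z.
Proof. by case: z => n; rewrite /zm ?lam_opp lam_natmul. Qed.

End Zm.

Import GRing.Theory Num.Theory.
Section IntSub.
Local Open Scope ring_scope.

Lemma int_subgroup (S : int -> Prop) :
  S 0 -> (forall a b, S a -> S b -> S (a + b)) -> (forall a, S a -> S (- a)) ->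
  exists m : nat, forall z, S z <-> exists k : int, z = k * m%:Z.
Proof.
move=> S0 SD SN.
have SMn : forall (n : nat) z, S z -> S (n%:Z * z).
  move=> n z Sz; elim: n => [|n IH]; first by rewrite mul0r.
  by rewrite -addn1 PoszD mulrDl mul1r; apply: SD.
have SM : forall k z, S z -> S (k * z).
  move=> [n|n] z Sz; first exact: SMn.
  by rewrite NegzE mulNr; apply: SN; apply: SMn.
case: (EM (exists n : nat, (0 < n)%N /\ S n)) => [ex|nex].
- have exb : exists n, `[< (0 < n)%N /\ S n >] by case: ex => n h; exists n; apply/asboolP.
  case: (ex_minnP exb) => m /asboolP [m0 Sm] mmin.
  exists m => z; split; last by case=> k ->; apply: SM.
  move=> Sz; exists (z %/ m)%Z.
  have Sr : S (z %% m)%Z.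
    have -> : (z %% m)%Z = z + - ((z %/ m)%Z * m) by rewrite {2}(divz_eq z m) addrAC subrr add0r.
    by apply: SD => //; apply: SN; apply: SM.
  have r0 : (0 <= (z %% m)%Z) by apply: modz_ge0; lia.
  have rlt : ((z %% m)%Z < m) by apply: ltz_pmod; lia.
  case: (boolP ((z %% m)%Z == 0)) => [/eqP r | rn].
    by rewrite {1}(divz_eq z m) r addr0.
  have : (m <= `|(z %% m)%Z|%N)%N.
    apply: mmin; apply/asboolP; split; first lia.
    by rewrite gez0_abs.
  lia.
- exists 0%N => z; split.
  + move=> Sz; exists 0; rewrite mulr0.
    case: (EM (z = 0)) => // nz; exfalso; apply: nex; exists `|z|%N; split; first lia.
    case: (ger0P z) => [z0|z0]; first by rewrite gez0_abs.
    by rewrite ltz0_abs //; apply: SN.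
  + by case=> k ->; rewrite mulr0.
Qed.

End IntSub.

Import GRing.Theory Num.Theory.

Section Cong.
Variable B : brace.
Variable J : B -> Prop.
Hypothesis iJ : ideal J.
Local Notation o := (bzero B).
Local Notation inv := (@binv B).
Local Notation lam := (@lambda B).

Definition eqJ (x y : B) := J (⊖ x ⊕ y).

Lemma aJ : addsub J. Proof. by case: iJ => [[]]. Qed.
Lemma mJ : is_subgroup (@bmul B) (bone B) inv J. Proof. by case: iJ => [[]]. Qed.
Lemma nJ : is_normal (@badd B) (@bopp B) J. Proof. by case: iJ. Qed.
Lemma nmJ : is_normal (@bmul B) (@binv B) J. Proof. by case: iJ. Qed.
Lemma lJ : lam_inv J. Proof. by case: iJ. Qed.

Lemma eqJ_refl x : eqJ x x.
Proof. by rewrite /eqJ baddNx; apply: (sub1 aJ). Qed.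
Lemma eqJ_sym x y : eqJ x y -> eqJ y x.
Proof. by move=> h; have := subV aJ h; rewrite (invM (addG B)) (invK (addG B)). Qed.
Lemma eqJ_trans x y z : eqJ x y -> eqJ y z -> eqJ x z.
Proof. by move=> h1 h2; have := subM aJ h1 h2; rewrite -baddA (opVK (addG B)). Qed.
Lemma eqJ_addl z x y : eqJ x y -> eqJ (z ⊕ x) (z ⊕ y).
Proof. by rewrite /eqJ (invM (addG B)) -baddA (opKV (addG B)). Qed.
Lemma eqJ_addr z x y : eqJ x y -> eqJ (x ⊕ z) (y ⊕ z).
Proof.
move=> h; have := nJ (⊖ z) h.
by rewrite /eqJ (invM (addG B)) (invK (addG B)) !baddA.
Qed.
Lemma eqJ_add x x' y y' : eqJ x x' -> eqJ y y' -> eqJ (x ⊕ y) (x' ⊕ y').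
Proof. move=> h1 h2; apply: eqJ_trans (eqJ_addr _ h1) (eqJ_addl _ h2). Qed.
Lemma eqJ_opp x y : eqJ x y -> eqJ (⊖ x) (⊖ y).
Proof.
move=> h; have := nJ x (eqJ_sym h).
by rewrite /eqJ (invK (addG B)) !baddA (opKN (addG B)).
Qed.
Lemma eqJ_lam b x y : eqJ x y -> eqJ (lam b x) (lam b y).
Proof. by move=> h; rewrite /eqJ -lam_opp -lam_add; apply: lJ. Qed.
Lemma eqJ_mem (H : B -> Prop) x y : addsub H -> (forall u, J u -> H u) ->
  H x -> eqJ x y -> H y.
Proof.
move=> sH JH Hx h; rewrite -(opVK (addG B) x y).
exact (subM sH Hx (JH _ h)).
Qed.
Lemma eqJ_mul x y : eqJ x y -> exists j, J j /\ y = x ⊗ j.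
Proof.
move=> h; exists (lam (inv x) (⊖ x ⊕ y)); split; first exact: lJ.
by rewrite -add_mul (opVK (addG B)).
Qed.

End Cong.

Import GRing.Theory Num.Theory.

Section Socle.
Variables (B : brace) (C J I : B -> Prop) (g : B).
Local Notation o := (bzero B).
Local Notation inv := (@binv B).
Local Notation lam := (@lambda B).
Local Notation nm := (natmul (@badd B) (bzero B)).
Hypotheses (mC : maximal_subbrace C) (iJ : ideal J) (iI : ideal I)
  (JI : forall x, J x -> I x) (JC : forall x, J x -> C x)
  (y0 : exists y, I y /\ ~ C y) (gI : I g)
  (gen : forall x, I x -> exists z, eqJ J (zm g z) x)
  (tf : forall n, J (nm g n) -> n = 0%N)
  (soc : quot_in_socle I J).

Let sC : subbrace C. Proof. by case: mC. Qed.
Let aC : addsub C. Proof. by case: sC. Qed.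
Let mCs : is_subgroup (@bmul B) (bone B) inv C. Proof. by case: sC. Qed.
Let aI : addsub I. Proof. by case: iI => [[]]. Qed.
Let mI : is_subgroup (@bmul B) (bone B) inv I. Proof. by case: iI => [[]]. Qed.

Let memC x y : C x -> eqJ J x y -> C y.
Proof. by move=> Cx h; exact (eqJ_mem aC JC Cx h). Qed.
Let memI x y : I x -> eqJ J x y -> I y.
Proof. by move=> Cx h; exact (eqJ_mem aI JI Cx h). Qed.
Let soc1 x b : I x -> eqJ J b (lam x b).
Proof. by move=> Ix; case: (soc Ix) => h _; apply: h. Qed.
Let soc2 x y : I x -> eqJ J (y ⊕ x) (x ⊕ y).
Proof. by move=> Ix; case: (soc Ix) => _ h; apply: h. Qed.
Let zmI z : I (zm g z).
Proof. exact (zm_sub z aI gI). Qed.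
Let lI : lam_inv I. Proof. by case: iI. Qed.

Local Open Scope ring_scope.

Definition La (a : nat) (x : B) := exists z : int, eqJ J (zm g (a%:Z * z)) x.

Lemma La_I a x : La a x -> I x.
Proof. by case=> z h; apply: memI (zmI _) h. Qed.

Lemma zm_cong h w n : eqJ J (zm g w) h -> eqJ J (zm g (n * w)) (zm h n).
Proof.
move=> hw.
have pos : forall k : nat, eqJ J (zm g (k%:Z * w)) (zm h k).
  elim=> [|k IH]; first by rewrite mul0r; apply: (eqJ_refl iJ).
  rewrite -addn1 PoszD mulrDl mul1r !zm_add (zm1 h).
  exact: (eqJ_add iJ IH hw).
case: n => [k|k]; first exact: pos.
rewrite NegzE mulNr !zmN; apply: (eqJ_opp iJ); exact: pos.
Qed.

Lemma JLa a x : J x -> La a x.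
Proof.
move=> Jx; exists 0; rewrite mulr0 /eqJ /= (inv1 (addG B)) badd0x //.
Qed.

Lemma La_ideal a : ideal (La a).
Proof.
have aL : addsub (La a).
  split.
  - by exists 0; rewrite mulr0; apply: (eqJ_refl iJ).
  - move=> x y [zx hx] [zy hy]; exists (zx + zy).
    by rewrite mulrDr zm_add; apply: (eqJ_add iJ).
  - move=> x [z h]; exists (- z).
    by rewrite mulrN zmN; apply: (eqJ_opp iJ).
have lL : lam_inv (La a).
  move=> b x [z h].
  have Ilbg : I (lam b g) by apply: lI.
  have [w hw] := gen Ilbg.
  exists (z * w).
  have h1 := eqJ_lam iJ b h; rewrite lam_zm in h1.
  apply: (eqJ_trans iJ _ h1).
  by rewrite mulrA; apply: zm_cong.
have mL := lsub_mulsub aL lL.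
split => //.
- move=> b x Lx.
  have Ix := La_I Lx.
  case: Lx => z h; exists z.
  apply: (eqJ_trans iJ h).
  have e := eqJ_addr iJ (⊖ b) (eqJ_sym iJ (soc2 b Ix)).
  by rewrite (opKN (addG B)) in e.
- move=> b x Lx.
  set k1 := lam b x.
  have Lk1 : La a k1 by apply: lL.
  have Ik1 := La_I Lk1.
  have e1 : eqJ J (b ⊗ x) (k1 ⊗ b).
    rewrite mul_add [k1 ⊗ b]mul_add.
    apply: (eqJ_trans iJ (soc2 b Ik1)).
    exact: eqJ_addl (soc1 b Ik1).
  have [j [Jj ej]] := eqJ_mul iJ (eqJ_sym iJ e1).
  rewrite ej -!bmulA.
  apply: (subM mL Lk1); rewrite !bmulA.
  apply: JLa; exact: (nmJ iJ).
Qed.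

Lemma socle_main :
  (forall x, exists y c, [/\ I y, C c & x = y ⊕ c]) ->
  (forall x, exists y c, [/\ I y, C c & x = y ⊗ c]) ->
  exists p, [/\ prime p, has_index (@badd B) (@bopp B) (@setT_ B) C p &
                 has_index (@bmul B) (@binv B) (@setT_ B) C p].
Proof.
move=> dec decm.
pose S z := C (zm g z).
have S0 : S 0 by rewrite /S zm0; exact: (sub1 aC).
have SD : forall a b, S a -> S b -> S (a + b).
  by move=> a b ha hb; rewrite /S zm_add; exact: (subM aC).
have SN : forall a, S a -> S (- a).
  by move=> a ha; rewrite /S zmN; exact: (subV aC).
have [m Sm] := int_subgroup S0 SD SN.
have m1 : m <> 1%N.
  move=> E; case: y0 => y [Iy nCy]; case: (gen Iy) => z hz.
  apply: nCy; apply: memC hz; apply/Sm; exists z; by rewrite E mulr1.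
have mP : prime m.
  case: (EM (prime m)) => // np; exfalso.
  have [a [a2 am an]] : exists a : nat, [/\ (1 < a)%N, (a %| m)%N & a <> m].
    case: (posnP m) => [->|m0]; first by exists 2%N.
    have m2 : (1 < m)%N by lia.
    exists (pdiv m); split; [exact: prime_gt1 (pdiv_prime m2) | exact: pdiv_dvd |].
    by move=> E; apply: np; rewrite -E; apply: pdiv_prime.
  have iL := La_ideal a.
  have aL : addsub (La a) by case: iL => [[]].
  have sD := D_subbrace sC iL.
  have CD : forall x, C x -> D C (La a) x.
    move=> x Cx; exists x; split => //; rewrite baddNx; exact: (sub1 aL).
  case: mC => _ _ /(_ _ sD CD) [allD | DC].
  - case: (allD g) => c [Cc [z hz]].
    have : S (1 - a%:Z * z).
      apply: memC Cc _.
      have e := eqJ_addl g (eqJ_opp iJ (eqJ_sym iJ hz)).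
      rewrite (invM (addG B)) (invK (addG B)) (opVK (addG B)) in e.
      by rewrite /S zm_add zmN zm1.
    move/Sm => [k hk]; case/dvdnP: am => t mt; rewrite mt PoszM in hk.
    have e : a%:Z * (z + k * t%:Z) = 1 by rewrite mulrDr; lia.
    move: e; generalize (z + k * t%:Z) => w e.
    have a2z : (2 <= a%:Z)%R by lia.
    case: (lerP w 0) => hw; nia.
  - have : D C (La a) (zm g a).
      exists o; split; first exact: (sub1 aC).
      rewrite (inv1 (addG B)) badd0x; exists 1; rewrite mulr1; exact: (eqJ_refl iJ).
    move/DC/Sm => [k hk]; case/dvdnP: am => t mt; rewrite mt PoszM in hk.
    have k1 : k * t%:Z = 1.
      apply: (@mulIf _ a%:Z); first lia.
      by rewrite mul1r -mulrA -hk.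
    have t1 : t = 1%N by case: (lerP k 0) => hk0; nia.
    by apply: an; rewrite mt t1 mul1n.
have m0 : (0 < m)%N by apply: prime_gt0.
pose f (i : 'I_m) := zm g (i : nat).
have addcov : forall y, I y -> exists i : 'I_m, C (⊖ f i ⊕ y).
  move=> y Iy; case: (gen Iy) => z hz.
  have r0 : (0 <= (z %% m)%Z) by apply: modz_ge0; lia.
  have rm : ((z %% m)%Z < m) by apply: ltz_pmod; lia.
  have rlt : (`|(z %% m)%Z| < m)%N by lia.
  exists (Ordinal rlt); rewrite /f; change (C (⊖ zm g (Posz `|(z %% m)%Z|%N) ⊕ y)); rewrite gez0_abs //.
  apply: memC (eqJ_addl _ hz).
  rewrite -zmN -zm_add; apply/Sm; exists (z %/ m)%Z.
  have := divz_eq z m; lia.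
have adddist : forall i j, C (⊖ f i ⊕ f j) -> i = j.
  move=> i j; rewrite /f -zmN -zm_add => /Sm [k hk]; apply: val_inj => /=.
  have := ltn_ord i; have := ltn_ord j => hj hi.
  have k0 : k = 0 by case: (ltrgtP k 0) => hk0 //; nia.
  rewrite k0 mul0r in hk; lia.
have P : forall a b, I a -> I b -> (C (inv a ⊗ b) <-> C (⊖ a ⊕ b)).
  move=> a b Ia Ib; have e := soc1 (⊖ a ⊕ b) (subV mI Ia).
  rewrite -invmul_lam in e; split => h; [exact: memC h (eqJ_sym iJ e) | exact: memC h e].
exists m; split => //.
- exists f; split => //.
  move=> x _; case: (dec x) => y [c [Iy Cc ->]].
  case: (addcov y Iy) => i hi; exists i; rewrite baddA; exact: (subM aC).
- exists f; split => //.
  + by move=> i j /(P _ _ (zmI _) (zmI _)) /adddist.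
  + move=> x _; case: (decm x) => y [c [Iy Cc ->]].
    case: (addcov y Iy) => i /(P _ _ (zmI _) Iy) hi; exists i; rewrite bmulA; exact: (subM mCs).
Qed.

End Socle.

Import GRing.Theory Num.Theory.

Lemma prime_main (B : brace) (C J I : B -> Prop) :
  maximal_subbrace C -> ideal J -> ideal I ->
  (forall x, J x -> I x) -> (forall x, J x -> C x) ->
  (exists y, I y /\ ~ C y) -> quot_prime_order I J ->
  (forall x, exists y c, [/\ I y, C c & x = y ⊕ c]) ->
  (forall x, exists y c, [/\ I y, C c & x = y ⊗ c]) ->
  exists p, [/\ prime p, has_index (@badd B) (@bopp B) (@setT_ B) C p &
                 has_index (@bmul B) (@binv B) (@setT_ B) C p].
Proof.
move=> mC iJ iI JI JC [y [Iy nCy]] [p [pp [f [fI fD fC]]]] dec decm.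
have sC : subbrace C by case: mC.
have aC : addsub C by case: sC.
have mCs : is_subgroup (@bmul B) (bone B) (@binv B) C by case: sC.
have aI : addsub I by case: iI => [[]].
have mI : is_subgroup (@bmul B) (bone B) (@binv B) I by case: iI => [[]].
have aJ : addsub J by case: iJ => [[]].
have lJ : lam_inv J by case: iJ.
have sK : addsub (fun x => C x /\ I x).
  split.
  - split; [exact: (sub1 aC) | exact: (sub1 aI)].
  - move=> a b [Ca Ia] [Cb Ib]; split; [exact: (subM aC) | exact: (subM aI)].
  - move=> a [Ca Ia]; split; [exact: (subV aC) | exact: (subV aI)].
have CIJ : forall x, C x -> I x -> J x.
  have [KJ | IK] := lagrange_prime (addG B) aI aJ sK (fun x Jx => conj (JC x Jx) (JI x Jx))
     (fun x h => proj2 h) pp (And3 fI fD fC).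
  - by move=> x Cx Ix; apply: KJ.
  - by exfalso; apply: nCy; case: (IK _ Iy).
exists p; split => //.
- apply: (index_transfer (addG B) aC _ JC CIJ aI dec).
  by exists f.
- apply: (index_transfer (mulG B) mCs _ JC CIJ mI decm).
  exists f; split => //.
  + by move=> i j /(coset_equiv lJ) /fD.
  + by move=> x Ix; case: (fC x Ix) => i /(coset_equiv lJ) hi; exists i.
Qed.

Import GRing.Theory Num.Theory.

Lemma max_sub_from_index (T : Type) (op : T -> T -> T) (e : T) (inv : T -> T) (C : T -> Prop) p :
  isGrp op e inv -> is_subgroup op e inv C -> (exists x, ~ C x) -> prime p ->
  has_index op inv (@setT_ T) C p -> maximal_subgroup op e inv C.
Proof.
move=> gax sC nC pp [f hf]; split => // K sK CK.
have sT : is_subgroup op e inv (@setT_ T) by [].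
have [KC | allK] := lagrange_prime gax sT sC sK CK (fun _ _ => I) pp hf.
- by right.
- by left => x; apply: allK.
Qed.

Theorem theorem3p19 (B : brace) (C : B -> Prop) :
  supersoluble B -> maximal_subbrace C ->
  exists p : nat,
    [/\ prime p,
        has_index (@badd B) (@bopp B) (@setT_ B) C p,
        has_index (@bmul B) (@binv B) (@setT_ B) C p,
        maximal_subgroup (@badd B) (bzero B) (@bopp B) C &
        maximal_subgroup (@bmul B) (bone B) (@binv B) C].
Proof.
move=> [n [Ich [I0 In Iid Imono Istep]]] mC.
have mC' := mC; case: mC' => sC nonC maxC.
have aC : addsub C by case: sC.
have mCs : is_subgroup (@bmul B) (bone B) (@binv B) C by case: sC.
pose PC k := forall x, Ich k x -> C x.
have [k [kn Pk nPk]] : exists k, [/\ (k < n)%N, PC k & ~ PC k.+1].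
  have claim : forall j, (j <= n)%N -> PC j \/ exists k, [/\ (k < j)%N, PC k & ~ PC k.+1].
    elim=> [|j IH] jn.
      left => x /I0 ->; exact: (sub1 aC).
    case: (IH (ltnW jn)) => [Pj | [k [kj Pk nPk]]]; last by right; exists k; split => //; lia.
    case: (EM (PC j.+1)) => [Pj1 | nPj1]; [by left | by right; exists j].
  case: (claim n (leqnn n)) => [Pn | //].
  exfalso; case: nonC => x nCx; apply: nCx; apply: Pn; apply: In.
set J := Ich k; set I := Ich k.+1.
have iJ : ideal J by apply: Iid; lia.
have iI : ideal I by apply: Iid; lia.
have JI : forall x, J x -> I x by apply: Imono.
have y0 : exists y, I y /\ ~ C y.
  case: (EM (exists y, I y /\ ~ C y)) => // ne; exfalso; apply: nPk => x Ix.
  case: (EM (C x)) => // nCx; exfalso; apply: ne; by exists x.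
have aI : addsub I by case: iI => [[]].
have nI : is_normal (@badd B) (@bopp B) I by case: iI.
have nmI : is_normal (@bmul B) (@binv B) I by case: iI.
have lI : lam_inv I by case: iI.
have allD : forall x, D C I x.
  have sD := D_subbrace sC iI.
  have CD : forall x, C x -> D C I x.
    move=> x Cx; exists x; split => //; rewrite baddNx; exact: (sub1 aI).
  case: (maxC _ sD CD) => // DC; exfalso.
  case: y0 => y [Iy nCy]; apply: nCy; apply: DC.
  exists (bzero B); split; first exact: (sub1 aC).
  by rewrite (inv1 (addG B)) badd0x.
have dec : forall x, exists y c, [/\ I y, C c & x = y ⊕ c].
  move=> x; case: (allD x) => c [Cc Ix].
  exists (c ⊕ (⊖ c ⊕ x) ⊕ ⊖ c), c; split => //; first exact: nI.
  by rewrite (opNK (addG B)) (opVK (addG B)).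
have decm : forall x, exists y c, [/\ I y, C c & x = y ⊗ c].
  move=> x; case: (allD x) => c [Cc /(coset_equiv lI) Ix].
  exists (c ⊗ (binv c ⊗ x) ⊗ binv c), c; split => //; first exact: nmI.
  by rewrite (opNK (mulG B)) (opVK (mulG B)).
have [p [pp hA hM]] : exists p, [/\ prime p, has_index (@badd B) (@bopp B) (@setT_ B) C p &
                 has_index (@bmul B) (@binv B) (@setT_ B) C p].
  case: (Istep k kn) => [[[g [gI [gen tf]]] soc] | pq].
  - apply: (socle_main (g := g) mC iJ iI JI Pk y0 gI _ soc dec decm).
    move=> x Ix; case: (gen x Ix) => m [hm | hm].
    + by exists m.
    + by exists (- m%:Z)%R; rewrite /eqJ zmN.
  - exact: (prime_main mC iJ iI JI Pk y0 pq dec decm).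
exists p; split => //.
- exact: (max_sub_from_index (addG B) aC nonC pp hA).
- exact: (max_sub_from_index (mulG B) mCs nonC pp hM).
Qed.
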